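(* Let $G$ be a finite group and $p$ a prime. Then $|G|_{p'}\,\chi(\mathcal O^*_G)$ is an integer.
   Context: $|G|_{p'}$ is the largest divisor of $|G|$ prime to $p$. $\mathcal O^*_G$ is the orbit category of nonidentity $p$-subgroups: objects are the nonidentity $p$-subgroups of $G$, morphisms $\mathcal O^*_G(H,K)=N_G(H,K)/K$ with $N_G(H,K)=\{g\in G: g^{-1}Hg\le K\}$, composition induced by multiplication. $\chi$ is Leinster's Euler characteristic: for a finite category $\mathcal C$, a weighting is $k^\bullet$ with $\sum_b|\mathcal C(a,b)|k^b=1$ for all objects $a$, a coweighting is $k_\bullet$ with $\sum_ak_a|\mathcal C(a,b)|=1$ for all $b$, and if both exist $\chi(\mathcal C)=\sum_bk^b=\sum_ak_a$ (this exists for $\mathcal O^*_G$). *)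

(* Defs.v *)
From HB Require Import structures.
From mathcomp Require Import all_boot all_order all_algebra all_fingroup all_solvable.
Set Implicit Arguments. Unset Strict Implicit. Unset Printing Implicit Defensive.
Import GRing.Theory Num.Theory.

Local Open Scope group_scope.

Section OrbitCategory.
Variables (gT : finGroupType) (G : {group gT}) (p : nat).

(* Objects of O*_G : the nonidentity p-subgroups of G. *)
Definition orbObj : {set {group gT}} :=
  [set H : {group gT} | [&& H \subset G, p.-group H & H :!=: 1]].

(* N_G(H,K) = { g in G | g^-1 H g <= K }  (H :^ g = g^-1 H g in mathcomp). *)
Definition transporter (H K : {group gT}) : {set gT} :=
  [set g in G | H :^ g \subset K].

(* |O*_G(H,K)| = |N_G(H,K)/K|, the number of cosets gK with g in N_G(H,K). *)
Definition orbHom (H K : {group gT}) : nat :=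
  #|lcosets K (transporter H K)|.

Definition is_weighting (k : {group gT} -> rat) : Prop :=
  forall a : {group gT}, a \in orbObj ->
    (\sum_(b in orbObj) (orbHom a b)%:R * k b = 1)%R.

Definition is_coweighting (k : {group gT} -> rat) : Prop :=
  forall b : {group gT}, b \in orbObj ->
    (\sum_(a in orbObj) k a * (orbHom a b)%:R = 1)%R.

End OrbitCategory.

(* Main.v *)
Require Import Defs.
From HB Require Import structures.
From mathcomp Require Import all_boot all_order all_algebra all_fingroup all_solvable.
From mathcomp Require Import zify ring.
Import GRing.Theory Num.Theory.
Set Implicit Arguments. Unset Strict Implicit. Unset Printing Implicit Defensive.
Open Scope group_scope.


Section Triang.
Variables (V : zmodType) (T : finType) (D : {set T}) (le : rel T) (rk : T -> nat).
Hypothesis le_refl : forall a, le a a.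

Lemma solve_down :
  (forall a b, a \in D -> b \in D -> le b a -> b != a -> (rk b < rk a)%N) ->
  forall f : T -> V, exists g : T -> V,
    forall a, a \in D -> (\sum_(b | (b \in D) && le b a) g b = f a)%R.
Proof.
move=> Hrk f.
suff H : forall n, exists g : T -> V, forall a, a \in D -> (rk a < n)%N ->
    (\sum_(b | (b \in D) && le b a) g b = f a)%R.
  have [g Hg] := H (\max_(a : T) rk a).+1.
  by exists g => a aD; apply: Hg => //; rewrite ltnS (leq_bigmax a).
elim=> [|n [g IH]]; first by exists (fun _ => 0%R).
exists (fun b => if rk b == n then (f b - \sum_(c | ((c \in D) && le c b) && (c != b)) g c)%R
                 else g b) => a aD ltan.
have Hb : forall b, (b \in D) && le b a && (b != a) ->
   (if rk b == n then (f b - \sum_(c | ((c \in D) && le c b) && (c != b)) g c)%R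
                 else g b) = g b.
  move=> b /andP[/andP[bD lba] nba].
  have := Hrk a b aD bD lba nba => lt.
  by rewrite ifN // neq_ltn (leq_trans lt) // -ltnS.
rewrite (bigD1 a) /=; last by rewrite aD le_refl.
rewrite (eq_bigr _ Hb).
case: eqP => [rka|/eqP rkan].
  by rewrite subrK.
rewrite -(bigD1 a) /=; last by rewrite aD le_refl.
by apply: IH => //; rewrite ltn_neqAle rkan -ltnS.
Qed.

Lemma unique_up :
  (forall a b, a \in D -> b \in D -> le a b -> a != b -> (rk a < rk b)%N) ->
  forall g : T -> V,
    (forall a, a \in D -> \sum_(b | (b \in D) && le a b) g b = 0)%R ->
    forall a, a \in D -> g a = 0%R.
Proof.
move=> Hrk g Hg.
set M := \max_(a : T) rk a.
suff H : forall n a, a \in D -> (M - rk a < n)%N -> g a = 0%R.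
  by move=> a aD; apply: (H (M - rk a).+1).
elim=> // n IH a aD ltn.
have := Hg a aD; rewrite (bigD1 a) /=; last by rewrite aD le_refl.
rewrite big1 ?addr0 // => b /andP[/andP[bD lab] nab].
apply: IH => //.
have lt' : (rk a < rk b)%N by apply: Hrk => //; rewrite eq_sym.
have hb : (rk b <= M)%N by apply: leq_bigmax.
rewrite -ltnS; apply: leq_trans ltn; rewrite ltnS ltn_sub2l //.
exact: leq_trans lt' hb.
Qed.

End Triang.

Section Chains.
Variable gT : finGroupType.
Implicit Types (Z s t : {set {group gT}}) (c x y : {group gT}).

Lemma grp_eq (H K : {group gT}) : H \subset K -> K \subset H -> H = K.
Proof. by move=> hk kh; apply: val_inj; apply/eqP; rewrite eqEsubset hk kh. Qed.

Definition chainb s := [forall x in s, forall y in s, (x \subset y) || (y \subset x)].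

Lemma chainP s : reflect (forall x y, x \in s -> y \in s -> (x \subset y) || (y \subset x))
                         (chainb s).
Proof.
apply: (iffP forall_inP) => [H x y xs ys | H x xs].
  by have /forall_inP := H x xs; apply.
by apply/forall_inP => y ys; apply: H.
Qed.

Lemma chain_sub s t : t \subset s -> chainb s -> chainb t.
Proof.
move=> /subsetP ts /chainP H; apply/chainP => x y xt yt; exact: H (ts _ xt) (ts _ yt).
Qed.

Lemma chainU1 c t : (forall x, x \in t -> c \subset x) -> chainb t -> chainb (c |: t).
Proof.
move=> Hc /chainP H; apply/chainP => x y; rewrite !inE.
case/predU1P=> [->|xt]; case/predU1P=> [->|yt]; rewrite ?subxx ?Hc //.
  by rewrite orbT.
exact: H.
Qed.

Definition ischain Z s := (s \subset Z) && chainb s.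

Definition etil Z : int := \sum_(s | ischain Z s) (-1) ^+ #|s|.

Definition up Z c := [set z in Z | c \proper z].
Definition upe Z c := [set z in Z | c \subset z].

Lemma etil_min Z q : q \in Z -> (forall z, z \in Z -> q \subset z) -> etil Z = 0%R.
Proof.
move=> qZ Hq.
pose iota s := if q \in s then s :\ q else q |: s.
have iotaK : involutive iota.
  move=> s; rewrite /iota; case: (boolP (q \in s)) => qs.
    by rewrite setD11 setD1K.
  by rewrite setU11 setU1K.
have Pi : forall s, ischain Z (iota s) = ischain Z s.
  move=> s; rewrite /iota /ischain; case: (boolP (q \in s)) => qs.
    apply/idP/idP => /andP[sZ cs]; last first.
      by rewrite (subset_trans (subsetDl _ _) sZ) (chain_sub (subsetDl _ _) cs).
    rewrite -(setD1K qs) subUset sub1set qZ sZ /=.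
    apply: chainU1 => // x xs.
    by apply: Hq; apply: (subsetP sZ).
  apply/idP/idP => /andP[sZ cs].
    by rewrite (subset_trans (subsetUr _ _) sZ) (chain_sub (subsetUr _ _) cs).
  rewrite subUset sub1set qZ sZ /=.
  by apply: chainU1 => // x xs; apply: Hq; apply: (subsetP sZ).
have Si : forall s, ((-1) ^+ #|iota s| = - (-1) ^+ #|s| :> int)%R.
  move=> s; rewrite /iota; case: ifP => qs.
    by rewrite -{2}(setD1K qs) cardsU1 setD11 exprS mulN1r opprK.
  by rewrite cardsU1 qs exprS mulN1r.
have E : etil Z = (- etil Z)%R.
  rewrite {1}/etil (reindex_inj (can_inj iotaK)) /=.
  rewrite /etil -sumrN; apply: eq_big => s; first by rewrite Pi.
  by rewrite Si.
lia.
Qed.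

Definition ismin s c := (c \in s) && [forall x in s, c \subset x].

Lemma min_unique Z s : ischain Z s -> s != set0 ->
  exists m, forall c, (c \in Z) && ismin s c = (c == m).
Proof.
move=> /andP[sZ /chainP cs] /set0Pn[x0 x0s].
pose m := [arg min_(x < x0 in s) #|x|].
have [ms minm] : m \in s /\ forall x, x \in s -> #|m| <= #|x|.
  by rewrite /m; case: arg_minnP => // y ys H.
have mmin : forall x, x \in s -> m \subset x.
  move=> x xs; case/orP: (cs m x ms xs) => // xm.
  have : x == m :> {set gT}.
    by rewrite eqEcard xm minm.
  by move/eqP ->.
exists m => c; apply/idP/idP.
  case/andP=> cZ /andP[cs' /forall_inP cmin].
  by rewrite (grp_eq (cmin _ ms) (mmin _ cs')).
move/eqP->; rewrite (subsetP sZ _ ms) /ismin ms /=.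
by apply/forall_inP.
Qed.

Lemma etil_split Z : (1 - etil Z = \sum_(c in Z) etil (up Z c))%R.
Proof.
rewrite /etil (bigD1 set0) /=; last by rewrite /ischain sub0set; apply/chainP=> x y; rewrite inE.
rewrite cards0 expr0 opprD addrA subrr add0r.
have -> : (\sum_(s | ischain Z s && (s != set0)) (-1) ^+ #|s| =
   \sum_(s | ischain Z s && (s != set0)) \sum_(c in Z | ismin s c) (-1) ^+ #|s| :> int)%R.
  apply: eq_bigr => s /andP[sc sn].
  have [m Hm] := min_unique sc sn.
  by rewrite (big_pred1 m) //= => c; rewrite /= Hm.
rewrite (exchange_big_dep (fun c => c \in Z)) /=; last by move=> s c _ /andP[].
rewrite -sumrN; apply: eq_bigr => c cZ.
rewrite (reindex_onto (fun t => c |: t) (fun s => s :\ c)) /=; last first.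
  by move=> s /and3P[_ _ /andP[cs _]]; rewrite setD1K.
rewrite -sumrN; apply: eq_big => t; last first.
  move=> /andP[_ /eqP Ht].
  have cnt : c \notin t by rewrite -Ht setD11.
  by rewrite cardsU1 cnt exprS mulN1r opprK.
apply/idP/idP.
  case/andP=> /and3P[/andP[/andP[ctZ cct] _] _ /andP[_ /forall_inP cmin]] /eqP Ht.
  have cnt : c \notin t by rewrite -Ht setD11.
  rewrite /ischain (chain_sub (subsetUr _ _) cct) andbT.
  apply/subsetP => x xt; rewrite inE (subsetP ctZ) ?inE ?xt ?orbT //=.
  rewrite properEneq cmin ?inE ?xt ?orbT // andbT.
  by apply: contraNneq cnt => /val_inj ->.
case/andP=> /subsetP tup ct.
have cnt : c \notin t by apply/negP => /tup; rewrite inE properxx andbF.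
rewrite setU1K // eqxx andbT /ischain cZ.
have Hc : forall x, x \in t -> c \subset x.
  by move=> x /tup; rewrite inE => /andP[_ /proper_sub].
rewrite chainU1 // andbT.
apply/and3P; split => //.
  rewrite subUset sub1set cZ /=; apply/andP; split.
    by apply/subsetP => x /tup; rewrite inE => /andP[].
  by apply/set0Pn; exists c; rewrite setU11.
rewrite /ismin setU11 /=; apply/forall_inP => x; rewrite !inE.
by case/orP => [/eqP->|/Hc].
Qed.

Lemma up_upe Z y c : c \in upe Z y -> up (upe Z y) c = up Z c.
Proof.
rewrite inE => /andP[cZ yc]; apply/setP => z; rewrite !inE.
apply: andb_id2r => /proper_sub cz; apply: andb_idr => zZ.
exact: subset_trans yc cz.
Qed.

Lemma up_eq Z y : y \in Z -> (\sum_(z in Z | y \subset z) etil (up Z z) = 1)%R.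
Proof.
move=> yZ; have := etil_split (upe Z y).
rewrite (@etil_min _ y); last 2 first.
- by rewrite inE yZ subxx.
- by move=> z; rewrite inE => /andP[].
rewrite subr0 => ->; symmetry.
rewrite [RHS](eq_bigl (fun c => c \in upe Z y)); last by move=> c; rewrite inE.
by apply: eq_bigr => c cu; rewrite up_upe.
Qed.

Lemma etil_closure Z (Q : {group gT}) (f : {group gT} -> {group gT}) :
  Q \in Z ->
  (forall c, c \in Z -> [/\ f c \in Z, c \subset f c, Q \subset f c &
       forall z, z \in Z -> c \subset z -> Q \subset z -> f c \subset z]) ->
  etil Z = 0%R.
Proof.
move=> QZ Hf.
pose g c := etil (up Z c).
pose h c := if Q \subset c then g c else 0%R.
have Hh : forall y, y \in Z -> (\sum_(z in Z | y \subset z) h z = 1)%R.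
  move=> y yZ; have [fyZ yfy Qfy fmin] := Hf y yZ.
  rewrite -big_mkcondr /=.
  have := up_eq (Z := upe Z Q) (y := f y); rewrite inE fyZ Qfy => /(_ isT) <-.
  apply: eq_big => z.
    rewrite !inE; apply/idP/idP.
      by case/andP=> /andP[zZ yz] Qz; rewrite zZ Qz fmin.
    case/andP=> /andP[zZ Qz] fyz; rewrite zZ Qz (subset_trans yfy fyz).
    done.
  by case/andP=> /andP[zZ _] Qz; rewrite /g up_upe // inE zZ Qz.
have gh : forall c, c \in Z -> g c = h c.
  move=> c cZ; apply/eqP; rewrite -subr_eq0; apply/eqP; move: c cZ.
  apply: (@unique_up _ _ Z (fun a b => a \subset b) (fun a => #|a|)).
  - exact: subxx.
  - move=> a b _ _ ab nab; apply: proper_card; rewrite properEneq ab andbT.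
    by apply: contraNneq nab => /val_inj ->.
  move=> a aZ; rewrite sumrB up_eq // Hh // subrr //.
have := etil_split Z.
rewrite (eq_bigr _ gh) -big_mkcondr /=.
have := etil_split (upe Z Q).
rewrite (@etil_min _ Q); last 2 first.
- by rewrite inE QZ subxx.
- by move=> z; rewrite inE => /andP[].
move=> E1 E2.
suff : (1 - etil Z = 1 - 0 :> int)%R by lia.
rewrite E2 E1; symmetry.
rewrite [LHS](eq_bigl (fun c => (c \in Z) && (Q \subset c))); last by move=> c; rewrite inE.
by apply: eq_bigr => c /andP[cZ Qc]; rewrite /g up_upe // inE cZ Qc.
Qed.

End Chains.


Lemma orbit_sum_dvd (aT : finGroupType) (rT : finType) (to : {action aT &-> rT})
   (G : {group aT}) (A : {set rT}) (f : rT -> int) (d : int) :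
  (forall x a, x \in A -> a \in G -> to x a \in A) ->
  (forall x a, x \in A -> a \in G -> f (to x a) = f x) ->
  (forall x, x \in A -> (d %| (#|orbit to G x|%:Z * f x)%R)%Z) ->
  (d %| (\sum_(x in A) f x)%R)%Z.
Proof.
move=> Hst Hf Hd.
move: {2}#|A|.+1 (ltnSn #|A|) => n; elim: n A Hst Hf Hd => // n IH A Hst Hf Hd ltA.
have [->|[x xA]] := set_0Vmem A; first by rewrite big_set0 dvdz0.
pose O := orbit to G x.
have OA : O \subset A.
  by apply/subsetP => y /orbitP[a aG <-]; apply: Hst.
rewrite (big_setID O) /= (setIidPr OA).
apply: rpredD.
  have -> : (\sum_(y in O) f y = \sum_(y in O) f x)%R.
    by apply: eq_bigr => y /orbitP[a aG <-]; apply: Hf.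
  by rewrite sumr_const -mulr_natl natz; apply: Hd.
apply: IH.
- move=> y a /setDP[yA yO] aG; rewrite inE Hst // andbT.
  apply: contra yO => yaO.
  have : to (to y a) a^-1 \in orbit to G (to y a) by apply: mem_orbit; rewrite groupV.
  rewrite actK.
  by move/orbit_trans; apply.
- by move=> y a /setDP[yA _] aG; apply: Hf.
- by move=> y /setDP[yA _]; apply: Hd.
- rewrite -ltnS; apply: leq_trans ltA; rewrite ltnS.
  rewrite (cardsD1 x A) xA add1n ltnS subset_leq_card //.
  apply/subsetP => y; rewrite !inE => /andP[yO ->]; rewrite andbT.
  by apply: contraNneq yO => ->; apply: orbit_refl.
Qed.

Section Burnside.
Variables (gT : finGroupType) (b R : {group gT}) (Y : {set {group gT}}).
Hypothesis bR : b \subset R.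
Hypothesis RN : R \subset 'N(b).
Hypothesis Ystab : forall c r, c \in Y -> r \in R -> (c :^ r)%G \in Y.
Hypothesis bY : forall c, c \in Y -> b \subset c.
Hypothesis HQ : forall Q : {group gT}, b \proper Q -> Q \subset R ->
  etil [set c in Y | Q \subset 'N(c)] = 0%R.

Local Notation to := ('JG^*)%act.
Definition sgn (s : {set {group gT}}) : int := ((-1) ^+ #|s|)%R.

Lemma fixP s (Q : {group gT}) : ischain Y s -> Q \subset R ->
  (Q \subset 'C_R[s | to]) = ischain [set c in Y | Q \subset 'N(c)] s.
Proof.
move=> /andP[sY cs] QR.
rewrite /ischain cs andbT subsetI QR /=.
apply/idP/idP.
- move=> /subsetP QC; apply/subsetP => c cs'; rewrite inE (subsetP sY _ cs') /=.
  apply/subsetP => q qQ; have /astab1P Hq := QC q qQ.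
  have cqs : (c :^ q)%G \in s.
    by rewrite -Hq /= setactE; apply: imset_f.
  apply/normP.
  have /chainP H := cs; case/orP: (H _ _ cqs cs') => sub.
    by apply/eqP; rewrite eqEcard sub cardJg leqnn.
  by apply/esym/eqP; rewrite eqEcard sub cardJg leqnn.
- move=> /subsetP sQ; apply/subsetP => q qQ; apply/astab1P.
  rewrite /= setactE -[RHS]imset_id; apply: eq_in_imset => c cs'.
  have := sQ c cs'; rewrite inE => /andP[_ /subsetP /(_ q qQ) /normP Hn].
  by apply: val_inj.
Qed.

Definition stabG s := ('C_R[s | to])%G.

Lemma b_stab s : ischain Y s -> b \subset 'C_R[s | to].
Proof.
move=> sc; rewrite fixP //; case/andP: sc => sY cs; rewrite /ischain cs andbT.
apply/subsetP => c cs'; have cY := subsetP sY _ cs'.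
by rewrite inE cY (subset_trans (bY cY)) ?normG.
Qed.

Definition W (Q : {group gT}) : int :=
  (\sum_(s | ischain Y s && ('C_R[s | to] == Q :> {set gT})) sgn s)%R.

Lemma sum_stab (P : {group gT} -> bool) :
  (\sum_(s | ischain Y s && P (stabG s)) sgn s = \sum_(Q | P Q) W Q)%R.
Proof.
transitivity (\sum_(s | ischain Y s)
    \sum_(Q | P Q && ('C_R[s | to] == Q :> {set gT})) sgn s)%R.
  rewrite big_mkcondr /=; apply: eq_bigr => s _; case: ifP => HP.
    rewrite (big_pred1 (stabG s)) // => Q /=; apply/idP/idP.
      by case/andP=> _ /eqP e; apply/eqP; apply: val_inj.
    by move/eqP->; rewrite HP eqxx.
  rewrite big1 // => Q /andP[PQ /eqP e].
  have eQ : stabG s = Q by apply: val_inj; rewrite /= e.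
  by rewrite eQ PQ in HP.
rewrite (exchange_big_dep P) /=; last by move=> s Q _ /andP[].
by apply: eq_bigr => Q PQ; apply: eq_bigl => s; rewrite PQ.
Qed.

Lemma W_out (Q : {group gT}) : ~~ (Q \subset R) -> W Q = 0%R.
Proof.
move=> nQR; rewrite /W big1 // => s /andP[_ /eqP e].
by move: nQR; rewrite -e subsetIl.
Qed.

Lemma W_b (Q : {group gT}) : ~~ (b \subset Q) -> W Q = 0%R.
Proof.
move=> nbQ; rewrite /W big1 // => s /andP[sc /eqP e].
by move: nbQ; rewrite -e b_stab.
Qed.

Lemma W0 (Q : {group gT}) : b \proper Q -> Q \subset R -> W Q = 0%R.
Proof.
suff H : forall n (Q : {group gT}), (#|gT| - #|Q| < n)%N -> b \proper Q ->
    Q \subset R -> W Q = 0%R by apply: H.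
elim=> // n IH {}Q lt bQ QR.
have F0 : (\sum_(Q' : {group gT} | Q \subset Q') W Q' = 0)%R.
  rewrite -(sum_stab (fun Q' => Q \subset Q')) /=.
  apply: etrans (HQ bQ QR); rewrite /etil; apply: eq_bigl => s.
  case sY: (ischain Y s) => /=; first by rewrite fixP.
  symmetry; apply: contraFF sY => /andP[sYQ cs]; rewrite /ischain cs andbT.
  by apply: subset_trans sYQ _; apply/subsetP => c; rewrite inE => /andP[].
rewrite (bigD1 Q) //= big1 ?addr0 in F0 => // Q' /andP[QQ' nQ'].
case QR': (Q' \subset R); last by rewrite W_out ?QR'.
have pQ : Q \proper Q'.
  by rewrite properEneq QQ' andbT; apply: contra nQ' => /eqP e; apply/eqP/val_inj.
apply: IH => //.
- have h1 : (#|Q'| <= #|gT|)%N by apply: max_card.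
  have := proper_card pQ; lia.
- exact: proper_sub_trans bQ (proper_sub pQ).
Qed.

Lemma brown_rel : (#|R : b|%:Z %| etil Y)%Z.
Proof.
have -> : etil Y = W b.
  rewrite /etil (eq_bigl (fun s => ischain Y s && true)); last by move=> s; rewrite andbT.
  rewrite (sum_stab (fun _ => true)) (bigD1 b) //= big1 ?addr0 // => Q nQb.
  case bQ: (b \subset Q); last by rewrite W_b ?bQ.
  case QR: (Q \subset R); last by rewrite W_out ?QR.
  apply: W0 => //; rewrite properEneq bQ andbT.
  by apply: contra nQb => /eqP e; apply/eqP/val_inj.
rewrite /W (eq_bigl (fun s => s \in [set s | ischain Y s && ('C_R[s | to] == b :> {set gT})]));
  last by move=> s; rewrite inE.
apply: (orbit_sum_dvd (to := to) (G := R)).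
- move=> s r; rewrite inE => /andP[/andP[sY cs] /eqP Cb] rR; rewrite inE.
  apply/andP; split.
    rewrite /ischain /= setactE; apply/andP; split.
      by apply/subsetP => c' /imsetP[c cs' ->]; apply: Ystab => //; apply: (subsetP sY).
    apply/chainP => c' d' /imsetP[c cs' ->] /imsetP[d ds ->].
    by rewrite /= !conjSg; apply: (chainP _ cs).
  rewrite astab1_act -(conjGid rR) -conjIg.
  have -> : 'C_R[s | to] = R :&: 'C[s | to] by [].
  by rewrite Cb; apply/eqP/normP; apply: (subsetP RN).
- by move=> s r _ _; rewrite /sgn card_setact.
- move=> s; rewrite inE => /andP[_ /eqP Cb].
  by rewrite card_orbit Cb; apply: dvdz_mulr; apply: dvdzz.
Qed.

End Burnside.


Section Main.
Variables (gT : finGroupType) (G : {group gT}) (p : nat).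
Hypothesis pr_p : prime p.

Local Notation S := (orbObj G p).

Lemma inS (H : {group gT}) : (H \in S) = [&& H \subset G, p.-group H & H :!=: 1].
Proof. by rewrite inE. Qed.

Lemma S_conj (a : {group gT}) g : a \in S -> g \in G -> (a :^ g)%G \in S.
Proof.
rewrite !inS /= => /and3P[aG pa a1] gG.
by rewrite -(conjGid gG) conjSg aG pgroupJ pa conjsg_eq1.
Qed.

Lemma card_trans (a b : {group gT}) : b \subset G ->
  #|transporter G a b| = (orbHom G a b * #|b|)%N.
Proof.
move=> bG; rewrite /orbHom /lcosets -sum1_card (partition_big_imset (lcoset b)) /=.
rewrite -sum_nat_const; apply: eq_bigr => C /imsetP[y yT ->].
rewrite sum1_card -(card_lcoset b y); apply: eq_card => x; rewrite unfold_in /= inE.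
move: yT; rewrite !inE => /andP[yG ayb].
apply/andP/idP.
  by case=> _ /eqP e; rewrite -lcosetE -e lcosetE lcoset_refl.
move=> xyb; split; last by apply/eqP; rewrite !lcosetE; apply/lcoset_eqP.
case/lcosetP: xyb => z zb ->.
apply/andP; split; first by rewrite groupM // (subsetP bG).
by rewrite conjsgM -(conjGid zb) conjSg.
Qed.

Definition L (b : {group gT}) : int := etil (up S b).

Lemma L_eq (a : {group gT}) : a \in S -> (\sum_(b in S | a \subset b) L b = 1)%R.
Proof. exact: up_eq. Qed.

Lemma L_conj (b : {group gT}) x : b \in S -> x \in G -> L (b :^ x)%G = L b.
Proof.
move=> bS xG.
pose h (c : {group gT}) := (c :^ x)%G.
have hinj : injective h.
  by move=> c d /(congr1 val) /= /conjsg_inj e; apply: val_inj.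
have hS : forall c, (h c \in S) = (c \in S).
  move=> c; apply/idP/idP => [|cS]; last exact: S_conj.
  move=> /(S_conj (g := x^-1)); rewrite groupV => /(_ xG).
  by have -> : ((h c) :^ x^-1)%G = c by apply: val_inj; rewrite /= conjsgK.
suff : forall c, c \in S -> (L (h c) - L c = 0)%R.
  by move=> H; apply: subr0_eq; apply: H.
apply: (@unique_up _ _ S (fun a b => a \subset b) (fun a => #|a|)).
- exact: subxx.
- move=> c d _ _ cd ncd; apply: proper_card; rewrite properEneq cd andbT.
  by apply: contraNneq ncd => /val_inj ->.
move=> a aS; rewrite sumrB L_eq //; apply/eqP; rewrite subr_eq0; apply/eqP.
transitivity (\sum_(c in S | (a :^ x)%G \subset c) L c)%R; last by rewrite L_eq //; apply: S_conj.
rewrite [RHS](reindex_inj hinj) /=.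
by apply: eq_bigl => c; rewrite hS conjSg.
Qed.

Definition k0 (b : {group gT}) : rat :=
  (((#|b|%:Z * L b)%:~R) / (#|G|%:R))%R.

Lemma sum_trans_L (a : {group gT}) : a \in S ->
  (\sum_(b in S) #|transporter G a b|%:Z * L b = #|G|%:Z)%R.
Proof.
move=> aS.
transitivity (\sum_(b in S) \sum_(g in G | a :^ g \subset b) L b)%R.
  apply: eq_bigr => b bS.
  rewrite (eq_bigl (fun g => g \in transporter G a b)); last by move=> g; rewrite inE.
  by rewrite sumr_const -mulr_natl natz.
rewrite (exchange_big_dep (fun g => g \in G)) /=; last by move=> b g _ /andP[].
transitivity (\sum_(g in G) (1 : int))%R; last by rewrite sumr_const natz.
apply: eq_bigr => g gG.
rewrite -(L_eq (S_conj aS gG)); apply: eq_bigl => b.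
by rewrite gG.
Qed.

Lemma intr_sum (I : finType) (P : pred I) (F : I -> int) :
  (((\sum_(i | P i) F i)%:~R : rat) = \sum_(i | P i) (F i)%:~R)%R.
Proof. by elim/big_rec2: _ => // i x y _ <-; rewrite intrD. Qed.

Lemma G0 : (#|G|%:R : rat)%R != 0%R.
Proof. by rewrite pnatr_eq0 -lt0n cardG_gt0. Qed.

Lemma k0_w : is_weighting G p k0.
Proof.
move=> a aS.
have H := sum_trans_L aS.
transitivity (((\sum_(b in S) #|transporter G a b|%:Z * L b)%:~R) / #|G|%:R : rat)%R;
  last by rewrite H divff // G0.
rewrite intr_sum mulr_suml; apply: eq_bigr => b bS.
have bG : b \subset G by move: bS; rewrite inS => /and3P[].
rewrite card_trans // /k0 PoszM !intrM !mulrA //.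
Qed.

Lemma cow_exists : exists c : {group gT} -> rat, is_coweighting G p c.
Proof.
have hyp : forall a b : {group gT}, a \in S -> b \in S -> b \subset a -> b != a -> (#|b| < #|a|)%N.
  move=> a b _ _ ba nba; apply: proper_card; rewrite properEneq ba andbT.
  by apply: contraNneq nba => /val_inj ->.
have [c Hc] := @solve_down rat _ S (fun x y : {group gT} => x \subset y) (fun x => #|x|)
   (fun a : {group gT} => subxx (gval a)) hyp (fun b => (#|b|%:R / #|G|%:R)%R).
exists c => b bS.
have bG : b \subset G by move: bS; rewrite inS => /and3P[].
have b0 : (#|b|%:R : rat)%R != 0%R by rewrite pnatr_eq0 -lt0n cardG_gt0.
suff E : (\sum_(a in S) c a * #|transporter G a b|%:R = #|b|%:R :> rat)%R.
  transitivity ((\sum_(a in S) c a * #|transporter G a b|%:R) / #|b|%:R : rat)%R;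
    last by rewrite E divff.
  rewrite mulr_suml; apply: eq_bigr => a aS.
  by rewrite card_trans // natrM mulrA mulfK.
transitivity (\sum_(a in S) \sum_(g in G | a :^ g \subset b) c a)%R.
  apply: eq_bigr => a aS.
  rewrite (eq_bigl (fun g => g \in transporter G a b)); last by move=> g; rewrite inE.
  by rewrite sumr_const mulr_natr.
rewrite (exchange_big_dep (fun g => g \in G)) /=; last by move=> a g _ /andP[].
transitivity (\sum_(g in G) (#|b|%:R / #|G|%:R : rat))%R.
  apply: eq_bigr => g gG.
  have gV : g^-1 \in G by rewrite groupV.
  rewrite -(cardJg b g^-1) -[#|b :^ g^-1|]/(#|(b :^ g^-1)%G|) -Hc; last exact: S_conj.
  by apply: eq_bigl => a; rewrite gG sub_conjg.
by rewrite sumr_const -(mulr_natr (#|b|%:R / #|G|%:R)%R) divfK // G0.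
Qed.

Lemma chi_transfer (k c : {group gT} -> rat) :
  is_weighting G p k -> is_coweighting G p c ->
  (\sum_(b in S) k b = \sum_(a in S) c a)%R.
Proof.
move=> Hk Hc.
transitivity (\sum_(b in S) (\sum_(a in S) c a * (orbHom G a b)%:R) * k b)%R.
  by apply: eq_bigr => b bS; rewrite Hc // mul1r.
rewrite (eq_bigr (fun b => \sum_(a in S) c a * ((orbHom G a b)%:R * k b))%R); last first.
  by move=> b _; rewrite mulr_suml; apply: eq_bigr => a _; rewrite mulrA.
rewrite exchange_big /=; apply: eq_bigr => a aS.
by rewrite -mulr_sumr Hk // mulr1.
Qed.

Lemma JG_E (c : {group gT}) r : 'JG%act c r = (c :^ r)%G.
Proof. by []. Qed.

Lemma L_dvd (b : {group gT}) (R : {group gT}) : b \in S -> p.-Sylow('N_G(b)) R ->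
  b \subset R /\ (#|R : b|%:Z %| L b)%Z.
Proof.
move=> bS sylR.
have [bG pb b1] : [/\ b \subset G, p.-group b & b :!=: 1] by apply/and3P; rewrite -inS.
have bR : b \subset R.
  exact: subset_trans (pcore_max pb (normalSG bG)) (pcore_sub_Hall sylR).
have RNG := pHall_sub sylR.
have RN : R \subset 'N(b) by apply: subset_trans RNG (subsetIr _ _).
have RG : R \subset G by apply: subset_trans RNG (subsetIl _ _).
have pR : p.-group R := pHall_pgroup sylR.
split => //.
apply: (brown_rel bR RN).
- move=> c r /setIdP[cS bc] rR.
  have rG := subsetP RG r rR.
  apply/setIdP; split; first exact: S_conj.
  by rewrite /= -(normP (subsetP RN r rR)) properJ.
- by move=> c; rewrite inE => /andP[_ /proper_sub].
move=> Q bQ QR.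
have QG : Q \subset G := subset_trans QR RG.
have pQ : p.-group Q := pgroupS QR pR.
apply: (@etil_closure _ _ Q (fun c => (c <*> Q)%G)).
  rewrite !inE QG pQ bQ normG /= andbT.
  rewrite andbT; apply: contraNN b1 => /eqP Q1; rewrite -subG1 -Q1; exact: proper_sub.
move=> c; rewrite !inE => /andP[/andP[/and3P[cG pc c1] bc] QNc].
split.
- rewrite /= join_subG cG QG /= norm_joinEr // pgroupM pc pQ /=.
  have cQ : c \subset c * Q := mulG_subl Q c.
  rewrite (proper_sub_trans bc cQ) andbT -(norm_joinEr QNc) normsY ?normG // andbT.
  apply: contraNN c1 => /eqP e; rewrite -subG1; apply: subset_trans (joing_subl c Q) _.
  by rewrite e.
- exact: joing_subl.
- exact: joing_subr.
- move=> z _ cz Qz; rewrite /= join_subG cz Qz //.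
Qed.

Lemma core_dvd : ((#|G|`_p)%:Z %| (\sum_(b in S) (#|b|%:Z * L b))%R)%Z.
Proof.
apply: (orbit_sum_dvd (to := 'JG%act) (G := G)).
- by move=> b g bS gG; rewrite JG_E S_conj.
- by move=> b g bS gG; rewrite JG_E /= cardJg L_conj.
move=> b bS.
have [bG pb b1] : [/\ b \subset G, p.-group b & b :!=: 1] by apply/and3P; rewrite -inS.
rewrite card_orbit astab1JG.
have [R sylR] := Sylow_exists p 'N_G(b).
have [bR /dvdzP[m mL]] := L_dvd bS sylR.
have NG : 'N_G(b) \subset G := subsetIl _ _.
have eGp : (#|G|`_p = #|G : 'N_G(b)|`_p * (#|b| * #|R : b|))%N.
  rewrite -(Lagrange NG) partnM ?cardG_gt0 ?indexg_gt0 //.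
  by rewrite -(card_Hall sylR) -(Lagrange bR) mulnC.
have eGN : (#|G : 'N_G(b)| = #|G : 'N_G(b)|`_p * #|G : 'N_G(b)|`_p^')%N.
  by rewrite partnC ?indexg_gt0.
apply/dvdzP; exists ((#|G : 'N_G(b)|`_p^')%:Z * m)%R.
rewrite eGp {1}eGN mL !PoszM; ring.
Qed.

Theorem main_thm :
  (exists k, is_weighting G p k) /\ (exists k, is_coweighting G p k) /\
  (forall k : {group gT} -> rat, is_weighting G p k ->
     exists z : int,
       ((#|G|`_(p^'))%:R * \sum_(b in orbObj G p) k b = z%:~R)%R).
Proof.
have [c Hc] := cow_exists.
split; first by exists k0; apply: k0_w.
split; first by exists c.
move=> k Hk.
rewrite (chi_transfer Hk Hc) -(chi_transfer k0_w Hc).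
have /dvdzP[m Hm] := core_dvd.
exists m.
have -> : (\sum_(b in S) k0 b = ((\sum_(b in S) (#|b|%:Z * L b)%R)%:~R) / #|G|%:R :> rat)%R.
  by rewrite intr_sum mulr_suml.
rewrite Hm intrM.
have eG : (#|G| = #|G|`_p * #|G|`_p^')%N by rewrite partnC ?cardG_gt0.
rewrite [in (#|G|%:R)%R]eG natrM.
have h1 : ((#|G|`_p)%:R : rat)%R != 0%R by rewrite pnatr_eq0 -lt0n part_gt0.
have h2 : ((#|G|`_p^')%:R : rat)%R != 0%R by rewrite pnatr_eq0 -lt0n part_gt0.
field.
by rewrite h1 h2.
Qed.

End Main.

Close Scope group_scope.

Theorem corollary4p4 (gT : finGroupType) (G : {group gT}) (p : nat) :
  prime p ->
  (exists k, is_weighting G p k) /\ (exists k, is_coweighting G p k) /\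
  (forall k : {group gT} -> rat, is_weighting G p k ->
     exists z : int,
       ((#|G|`_(p^'))%:R * \sum_(b in orbObj G p) k b = z%:~R)%R).
Proof. by move=> _; apply: main_thm. Qed.
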